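(* With $Y$, $Y_\bullet$, $\mathbf u$, $\mathbf v$, $R^{\mathbf v}_{\mathbf u}$ as in the context, the valuation monoids and Newton–Okounkov bodies satisfy $$\Gamma^{\mathbf v}_{Y_\bullet}=\{\mathbf a\cdot\tilde R^{\mathbf v}_{\mathbf u}\mid \mathbf a\in\Gamma^{\mathbf u}_{Y_\bullet}\}\quad\text{and}\quad \Delta^{\mathbf u}_{Y_\bullet}\cdot R^{\mathbf v}_{\mathbf u}=\Delta^{\mathbf v}_{Y_\bullet}.$$
   Context: $\mathbb K$ is algebraically closed of characteristic $0$, $Y\subseteq\mathbb P(V)$ a projective variety of dimension $r$, $Y_\bullet:Y=Y_r\supseteq\cdots\supseteq Y_0=\{p\}$ a flag of subvarieties with $\dim Y_k=k$, each $Y_k$ smooth in codimension one so that $\mathcal O_{Y_{k-1},Y_k}$ is a DVR. For a sequence of parameters $\mathbf u=(u_r,\dots,u_1)$ ($u_k|_{Y_k}$ a uniformizer of $\mathcal O_{Y_{k-1},Y_k}$) the valuation $\nu^{\mathbf u}_{Y_\bullet}:\mathbb K(Y)\setminus\{0\}\to\mathbb Z^r$ is: $a_r$ = vanishing order of $f_r:=f$ along $Y_{r-1}$, $f_{k-1}:=(u_k^{-a_k}f_k)|_{Y_{k-1}}$ and $a_{k-1}$ = vanishing order of $f_{k-1}$ along $Y_{k-2}$; $\nu^{\mathbf u}_{Y_\bullet}(f)=(a_r,\dots,a_1)$ (row vector). For two sequences of parameters $\mathbf u,\mathbf v$, let $\lambda_k\in\mathcal O^\times_{Y_{k-1},Y_k}$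 with $u_k|_{Y_k}=\lambda_kv_k|_{Y_k}$, let $M^{\mathbf v}_{\mathbf u}$ have $k$-th row $\nu^{\mathbf v}_{Y^k_\bullet}(\lambda_k)$ (the valuation for the truncated flag $Y_k\supseteq\dots\supseteq Y_0$ with parameters $(v_k,\dots,v_1)$, padded with zeros in front to length $r$), and $R^{\mathbf v}_{\mathbf u}=\mathrm I_r+M^{\mathbf v}_{\mathbf u}$. $\tilde R^{\mathbf v}_{\mathbf u}\in\mathrm{Mat}_{r+1}(\mathbb Z)$ has first row and column equal to $(1,0,\dots,0)$ and lower right $r\times r$ block $R^{\mathbf v}_{\mathbf u}$. Let $\mathbb K[Y]=\bigoplus_m\mathbb K[Y]_m$ be the homogeneous coordinate ring and fix $\tau\in\mathbb K[Y]_1$ not vanishing at $p$. For a valuation $\nu$, $\Gamma_\nu:=\{0\}\cup\bigcup_{m\ge1}\{(m,\nu(f/\tau^m))\mid f\in\mathbb K[Y]_m\setminus\{0\}\}\subseteq\mathbb N\times\mathbb Z^r$ and $\Delta_\nu$ is the closure of the convex hull of $\{\mathbf a/m\mid(m,\mathbf a)\in\Gamma_\nu,m\ge1\}$ in $\mathbb R^r$. $\Gamma^{\mathbf u}_{Y_\bullet},\Delta^{\mathbf u}_{Y_\bullet}$ denote these for $\nu=\nu^{\mathbf u}_{Y_\bullet}$. *)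

(* Defs.v *)
From HB Require Import structures.
From mathcomp Require Import all_boot all_order all_algebra.
From mathcomp Require Import boolp classical_sets reals.
Unset Printing Implicit Defensive.
Import Order.TTheory GRing.Theory Num.Theory.
Local Open Scope ring_scope.
Local Open Scope classical_set_scope.

(* Abstract algebraic data of a flag  Y = Y_r ⊇ ... ⊇ Y_0 = {p}  with each
   O_{Y_k, Y_{k+1}} a DVR:
   - fld k        = the function field K(Y_k)               (k = 0..r)
   - ord k        = the normalized discrete valuation on K(Y_{k+1}) given by
                    vanishing order along Y_k                (k < r)
   - res k        = restriction  O_{Y_k,Y_{k+1}} -> K(Y_k), i.e. the residue
                    map of that DVR (values outside the DVR are irrelevant).
   The value [ord k 0] is irrelevant. *)
Record valued_flag (r : nat) := ValuedFlag {
  fld : nat -> fieldType;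
  ord : forall k, fld k.+1 -> int;
  res : forall k, fld k.+1 -> fld k;
  ord_mul : forall k, (k < r)%N -> forall x y : fld k.+1, x != 0 -> y != 0 ->
    ord k (x * y) = ord k x + ord k y;
  ord_add : forall k, (k < r)%N -> forall x y : fld k.+1,
    x != 0 -> y != 0 -> x + y != 0 -> Num.min (ord k x) (ord k y) <= ord k (x + y);
  ord_unif : forall k, (k < r)%N -> exists t : fld k.+1, t != 0 /\ ord k t = 1;
  res_add : forall k, (k < r)%N -> forall x y : fld k.+1,
    (x == 0) || (0 <= ord k x) -> (y == 0) || (0 <= ord k y) ->
    res k (x + y) = res k x + res k y;
  res_mul : forall k, (k < r)%N -> forall x y : fld k.+1,
    (x == 0) || (0 <= ord k x) -> (y == 0) || (0 <= ord k y) ->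
    res k (x * y) = res k x * res k y;
  res_one : forall k, (k < r)%N -> res k 1 = 1;
  res_ker : forall k, (k < r)%N -> forall x : fld k.+1,
    (x == 0) || (0 <= ord k x) -> (res k x == 0) = ((x == 0) || (0 < ord k x));
  res_surj : forall k, (k < r)%N -> forall z : fld k,
    exists x : fld k.+1, ((x == 0) || (0 <= ord k x)) /\ res k x = z
}.

Arguments fld {r} _ _.
Arguments ord {r} _ _ _.
Arguments res {r} _ _ _.

Section Defs.
Context {r : nat} (F : valued_flag r).

(* a sequence of parameters: u k is (the restriction to Y_{k+1} of) the
   paper's u_{k+1}, a uniformizer of O_{Y_k,Y_{k+1}} *)
Definition is_params (u : forall k, fld F k.+1) : Prop :=
  forall k, (k < r)%N -> u k != 0 /\ ord F k (u k) = 1.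

(* valuation of the truncated flag Y_k ⊇ ... ⊇ Y_0 : list (a_k, ..., a_1) *)
Fixpoint nuseq (u : forall k, fld F k.+1) (k : nat) : fld F k -> seq int :=
  match k return fld F k -> seq int with
  | 0 => fun _ => [::]
  | k'.+1 => fun f =>
      let a := ord F k' f in
      a :: nuseq u k' (res F k' (u k' ^ (- a) * f))
  end.

(* nu^u_{Y_bullet} : K(Y) \ 0 -> Z^r as a row vector (a_r, ..., a_1) *)
Definition nu (u : forall k, fld F k.+1) (f : fld F r) : 'rV[int]_r :=
  \row_(i < r) nth 0 (nuseq u r f) i.

(* lambda_k in K(Y_k) with u_k|_{Y_k} = lambda_k v_k|_{Y_k} *)
Definition lam (u v : forall k, fld F k.+1) (k : nat) : fld F k :=
  match k return fld F k with
  | 0 => 1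
  | k'.+1 => u k' / v k'
  end.

(* M^v_u : row i (0-based) corresponds to the coordinate a_k, k = r - i, and is
   nu^v_{Y^k_bullet}(lambda_k) padded with r - k zeros in front *)
Definition Mmat (u v : forall k, fld F k.+1) : 'M[int]_r :=
  \matrix_(i < r, j < r)
    let k := (r - i)%N in nth 0 (nseq (r - k) 0 ++ nuseq v k (lam u v k)) j.

Definition Rmat (u v : forall k, fld F k.+1) : 'M[int]_r := 1%:M + Mmat u v.

Definition Rtilde (u v : forall k, fld F k.+1) : 'M[int]_(1 + r) :=
  block_mx 1%:M 0 0 (Rmat u v).

(* S m = { f / tau^m | f in K[Y]_m }  (a subset of K(Y)) *)
Definition Gamma (u : forall k, fld F k.+1) (S : nat -> set (fld F r))
  : set 'rV[int]_(1 + r) :=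
  [set x | x = 0 \/ exists m (f : fld F r),
     [/\ (1 <= m)%N, S m f, f != 0 & x = row_mx ((m%:Z)%:M) (nu u f)]].

Definition conv_hull (R : realType) (A : set 'rV[R]_r) : set 'rV[R]_r :=
  [set x | exists n (w : 'I_n -> R) (p : 'I_n -> 'rV[R]_r),
     [/\ forall i, 0 <= w i, \sum_i w i = 1, forall i, A (p i)
       & x = \sum_i w i *: p i]].

Definition rclosure (R : realType) (A : set 'rV[R]_r) : set 'rV[R]_r :=
  [set x | forall e : R, 0 < e -> exists2 y, A y & forall i, `|x ord0 i - y ord0 i| < e].

Definition Delta (R : realType) (u : forall k, fld F k.+1) (S : nat -> set (fld F r))
  : set 'rV[R]_r :=
  @rclosure R (@conv_hull R
    [set ((lsubmx x ord0 ord0)%:~R)^-1 *: map_mx (fun z : int => z%:~R) (rsubmx x)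
      | x in [set x | Gamma u S x /\ 1 <= lsubmx x ord0 ord0]]).

End Defs.

(* Main.v *)
Require Import Defs.
From HB Require Import structures.
From mathcomp Require Import all_boot all_order all_algebra.
From mathcomp Require Import boolp classical_sets reals.
Import Order.TTheory GRing.Theory Num.Theory.
Local Open Scope ring_scope.
Local Open Scope classical_set_scope.

Lemma ordM {r} {F : valued_flag r} {k} {x y : fld F k.+1} : (k < r)%N -> x != 0 -> y != 0 ->
  ord F k (x * y) = ord F k x + ord F k y.
Proof. by move=> kr; apply: ord_mul. Qed.

Lemma resM {r} {F : valued_flag r} {k} {x y : fld F k.+1} : (k < r)%N ->
  0 <= ord F k x -> 0 <= ord F k y -> res F k (x * y) = res F k x * res F k y.
Proof. by move=> kr hx hy; apply: res_mul => //; apply/orP; right. Qed.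

Lemma res_neq0 {r} {F : valued_flag r} {k} {x : fld F k.+1} : (k < r)%N ->
  x != 0 -> ord F k x = 0 -> res F k x != 0.
Proof. by move=> kr x0 o0; rewrite res_ker ?o0 ?lexx ?orbT // (negbTE x0) ltxx. Qed.

Lemma ord1 {r} {F : valued_flag r} {k} : (k < r)%N -> ord F k 1 = 0.
Proof.
move=> kr; have := @ordM _ F k 1 1 kr (oner_neq0 _) (oner_neq0 _).
rewrite mulr1 => /esym/eqP; rewrite -subr_eq0 addrK => /eqP //.
Qed.

Lemma ordV {r} {F : valued_flag r} {k} {x : fld F k.+1} : (k < r)%N -> x != 0 ->
  ord F k x^-1 = - ord F k x.
Proof.
move=> kr x0; have := ordM kr x0 (invr_neq0 x0).
rewrite mulfV // ord1 // => /eqP; rewrite eq_sym addrC addr_eq0 => /eqP //.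
Qed.

Lemma ordXn {r} {F : valued_flag r} {k} {x : fld F k.+1} (n : nat) : (k < r)%N -> x != 0 ->
  ord F k (x ^+ n) = n%:Z * ord F k x.
Proof.
move=> kr x0; elim: n => [|n IH]; first by rewrite expr0 ord1 // mul0r.
rewrite exprS ordM // ?expf_neq0 // IH intS mulrDl mul1r //.
Qed.

Lemma ordX {r} {F : valued_flag r} {k} {x : fld F k.+1} (z : int) : (k < r)%N -> x != 0 ->
  ord F k (x ^ z) = z * ord F k x.
Proof.
move=> kr x0; case: z => n; first exact: ordXn.
rewrite /exprz ordV ?expf_neq0 // ordXn // NegzE mulNr //.
Qed.

Lemma res1 {r} {F : valued_flag r} {k} : (k < r)%N -> res F k 1 = 1.
Proof. by move=> kr; apply: res_one. Qed.

Lemma resXn {r} {F : valued_flag r} {k} {x : fld F k.+1} (n : nat) : (k < r)%N -> x != 0 ->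
  ord F k x = 0 -> res F k (x ^+ n) = res F k x ^+ n.
Proof.
move=> kr x0 o0; elim: n => [|n IH]; first by rewrite !expr0 res1.
by rewrite !exprS resM ?o0 ?ordXn ?o0 ?mulr0 // IH.
Qed.

Lemma resX {r} {F : valued_flag r} {k} {x : fld F k.+1} (z : int) : (k < r)%N -> x != 0 ->
  ord F k x = 0 -> res F k (x ^ z) = res F k x ^ z.
Proof.
move=> kr x0 o0; case: z => n; first exact: resXn.
rewrite /exprz -(resXn n.+1 kr x0 o0).
set y := x ^+ n.+1.
have y0 : y != 0 by rewrite expf_neq0.
have oy : ord F k y = 0 by rewrite ordXn // o0 mulr0.
have ry : res F k y != 0 by apply: res_neq0.
have := resM kr (_ : 0 <= ord F k y) (_ : 0 <= ord F k y^-1).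
rewrite mulfV // res1 // ordV // oy oppr0 lexx => /(_ isT isT) h.
by apply: (mulfI ry); rewrite -h mulfV.
Qed.

Lemma norm_ord {r} {F : valued_flag r} {w : forall k, fld F k.+1} {k} {x : fld F k.+1} :
  is_params F w -> (k < r)%N -> x != 0 ->
  (w k ^ (- ord F k x) * x != 0) /\ ord F k (w k ^ (- ord F k x) * x) = 0.
Proof.
move=> hw kr x0; have [w0 w1] := hw k kr.
have e0 : w k ^ (- ord F k x) != 0 by rewrite expfz_neq0.
split; first by rewrite mulf_neq0.
by rewrite ordM // ordX // w1 mulr1 addNr.
Qed.

Lemma nu_mul {r} {F : valued_flag r} {w : forall k, fld F k.+1} {k} {x y : fld F k} : is_params F w ->
  (k <= r)%N -> x != 0 -> y != 0 -> forall t,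
  nth 0 (nuseq F w k (x * y)) t = nth 0 (nuseq F w k x) t + nth 0 (nuseq F w k y) t.
Proof.
move=> hw; elim: k x y => [|k IH] x y kr x0 y0 t /=; first by rewrite nth_nil addr0.
have [w0 w1] := hw k kr.
case: t => [|t] /=; first by rewrite ordM.
have [nx ox] := norm_ord hw kr x0; have [ny oy] := norm_ord hw kr y0.
rewrite ordM // opprD expfzDr // mulrACA resM ?ox ?oy //.
rewrite IH ?(ltnW kr) //; exact: res_neq0.
Qed.

Lemma nu1 {r} {F : valued_flag r} {w : forall k, fld F k.+1} {k} : is_params F w ->
  (k <= r)%N -> forall t, nth 0 (nuseq F w k 1) t = 0.
Proof.
move=> hw kr t; have := nu_mul hw kr (oner_neq0 _) (oner_neq0 _) t.
rewrite mulr1 => /esym/eqP; rewrite -subr_eq0 addrK => /eqP //.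
Qed.

Lemma nu_inv {r} {F : valued_flag r} {w : forall k, fld F k.+1} {k} {x : fld F k} : is_params F w ->
  (k <= r)%N -> x != 0 -> forall t,
  nth 0 (nuseq F w k x^-1) t = - nth 0 (nuseq F w k x) t.
Proof.
move=> hw kr x0 t; have := nu_mul hw kr x0 (invr_neq0 x0) t.
rewrite mulfV // nu1 // => /eqP; rewrite eq_sym addrC addr_eq0 => /eqP //.
Qed.

Lemma nu_exp {r} {F : valued_flag r} {w : forall k, fld F k.+1} {k} {x : fld F k} : is_params F w ->
  (k <= r)%N -> x != 0 -> forall (z : int) t,
  nth 0 (nuseq F w k (x ^ z)) t = z * nth 0 (nuseq F w k x) t.
Proof.
move=> hw kr x0.
have hn : forall (n : nat) t, nth 0 (nuseq F w k (x ^+ n)) t = n%:Z * nth 0 (nuseq F w k x) t.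
  elim=> [|n IH] t; first by rewrite expr0 nu1 // mul0r.
  by rewrite exprS nu_mul ?expf_neq0 // IH intS mulrDl mul1r.
case=> n t; first exact: hn.
by rewrite /exprz nu_inv ?expf_neq0 // hn NegzE mulNr.
Qed.

Definition Nent {r} (F : valued_flag r) (u v : forall k, fld F k.+1) (k s t : nat) : int :=
  if (s <= t)%N then nth 0 (nuseq F v (k - s) (lam F u v (k - s))) (t - s) else 0.

Lemma main_level {r} {F : valued_flag r} {u v : forall k, fld F k.+1} :
  is_params F u -> is_params F v -> forall k, (k <= r)%N -> forall x : fld F k, x != 0 ->
  forall t, nth 0 (nuseq F v k x) t =
    nth 0 (nuseq F u k x) t + \sum_(s < k) nth 0 (nuseq F u k x) s * Nent F u v k s t.
Proof.
move=> hu hv; elim=> [|k IH] kr x x0 t.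
  by rewrite /= nth_nil big_ord0 addr0.
have [u0 u1] := hu k kr; have [v0 v1] := hv k kr.
have lamE : lam F u v k.+1 = u k / v k by [].
have l0 : lam F u v k.+1 != 0 by rewrite lamE mulf_neq0 ?invr_eq0.
have ol : ord F k (lam F u v k.+1) = 0 by rewrite lamE ordM ?invr_eq0 // ordV // u1 v1 addrN.
have N0 : forall t, Nent F u v k.+1 0 t = nth 0 (nuseq F v k.+1 (lam F u v k.+1)) t.
  by move=> t0; rewrite /Nent leq0n !subn0.
rewrite big_ord_recl /= N0.
set a := ord F k x.
have [nu' ou] := norm_ord hu kr x0.
have gu0 : res F k (u k ^ (- a) * x) != 0 by apply: res_neq0.
case: t => [|t] /=.
  rewrite ol mulr0 add0r big1 ?addr0 // => s _; by rewrite /Nent /= mulr0.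
have NS : forall s : 'I_k, Nent F u v k.+1 (bump 0 s) t.+1 = Nent F u v k s t.
  by move=> s; rewrite /Nent /bump /= add1n ltnS subSS.
under eq_bigr => s _ do rewrite NS.
rewrite addrCA -IH ?(ltnW kr) //.
rewrite ol oppr0 expr0z mul1r.
set rho := res F k (lam F u v k.+1).
have rho0 : rho != 0 by apply: res_neq0.
have key : v k ^ (- a) * x = lam F u v k.+1 ^ a * (u k ^ (- a) * x).
  rewrite lamE expfzMl exprz_inv mulrA; congr (_ * _).
  by rewrite mulrAC -expfzDr // addrN expr0z mul1r.
rewrite key resM ?ou ?ordX ?ol ?mulr0 // resX //.
rewrite nu_mul ?(ltnW kr) ?expfz_neq0 // nu_exp ?(ltnW kr) //.
Qed.

Lemma nu_R {r} {F : valued_flag r} {u v : forall k, fld F k.+1} (f : fld F r) :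
  is_params F u -> is_params F v -> f != 0 -> nu F v f = nu F u f *m Rmat F u v.
Proof.
move=> hu hv f0; apply/rowP => j.
rewrite /Rmat mulmxDr mulmx1 !mxE (main_level hu hv) //; congr (_ + _).
apply: eq_bigr => i _; rewrite !mxE /=; congr (_ * _).
rewrite /Nent subKn ?(ltnW (ltn_ord i)) // nth_cat size_nseq nth_nseq.
by case: leqP => h; rewrite ?if_same.
Qed.

Lemma Rt_mul {r} {F : valued_flag r} (u v : forall k, fld F k.+1) (x : 'rV[int]_(1 + r)) :
  x *m Rtilde F u v = row_mx (lsubmx x) (rsubmx x *m Rmat F u v).
Proof.
rewrite -{1}(hsubmxK x) /Rtilde mul_row_block !mulmx0 mulmx1 addr0 add0r //.
Qed.

Lemma Gamma_eq {r} {F : valued_flag r} {u v : forall k, fld F k.+1} S :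
  is_params F u -> is_params F v ->
  Gamma F v S = [set x *m Rtilde F u v | x in Gamma F u S].
Proof.
move=> hu hv; apply/seteqP; split => x.
  case=> [->|[m [f [m1 Sf f0 ->]]]].
    by exists 0; [left | rewrite mul0mx].
  exists (row_mx (m%:Z)%:M (nu F u f)); first by right; exists m, f.
  by rewrite Rt_mul row_mxKl row_mxKr (nu_R _ hu hv).
case=> y [->|[m [f [m1 Sf f0 ->]]]] <-; first by left; rewrite mul0mx.
right; exists m, f; split => //.
by rewrite Rt_mul row_mxKl row_mxKr (nu_R _ hu hv).
Qed.

Lemma mx_bound (R : realType) r (B : 'M[R]_r) : exists2 C : R, 0 < C &
  forall (x : 'rV[R]_r) e, 0 < e -> (forall i, `|x ord0 i| < e) ->
  forall j, `|(x *m B) ord0 j| < C * e.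
Proof.
exists (1 + \sum_i \sum_j `|B i j|).
  by rewrite ltr_pwDl // sumr_ge0 // => i _; rewrite sumr_ge0.
move=> x e e0 hx j; rewrite mxE.
apply: (le_lt_trans (ler_norm_sum _ _ _)).
apply: (@le_lt_trans _ _ (e * \sum_i \sum_j `|B i j|)); last first.
  by rewrite [X in _ < X]mulrC ltr_pM2l // ltrDr.
rewrite mulr_sumr; apply: ler_sum => i _; rewrite normrM.
apply: (@le_trans _ _ (e * `|B i j|)).
  by rewrite ler_wpM2r // ltW.
rewrite ler_pM2l // (bigD1 j) //= lerDl; exact: sumr_ge0.
Qed.

Lemma closure_map (R : realType) r (B Bi : 'M[R]_r) (A : set 'rV[R]_r) :
  B *m Bi = 1%:M -> Bi *m B = 1%:M ->
  [set x *m B | x in rclosure R A] = rclosure R [set x *m B | x in A].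
Proof.
move=> BBi BiB; have [C C0 hC] := mx_bound _ _ B; have [Ci Ci0 hCi] := mx_bound _ _ Bi.
apply/seteqP; split => z.
  case=> x hx <- e e0.
  have [y Ay hy] := hx (e / C) (divr_gt0 e0 C0).
  exists (y *m B); first by exists y.
  move=> i; have := hC (x - y) (e / C) (divr_gt0 e0 C0) _ i.
  rewrite [C * _]mulrC divfK ?gt_eqF // mulmxBl !mxE; apply.
  by move=> j; rewrite !mxE.
move=> hz; exists (z *m Bi); last by rewrite -mulmxA BiB mulmx1.
move=> e e0.
have [w [y Ay <-] hw] := hz (e / Ci) (divr_gt0 e0 Ci0).
exists y => // i.
have := hCi (z - y *m B) (e / Ci) (divr_gt0 e0 Ci0) _ i.
rewrite [Ci * _]mulrC divfK ?gt_eqF // mulmxBl -mulmxA BBi mulmx1 !mxE; apply.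
by move=> j; have := hw j; rewrite !mxE.
Qed.

Lemma conv_map (R : realType) r (B Bi : 'M[R]_r) (A : set 'rV[R]_r) :
  B *m Bi = 1%:M -> Bi *m B = 1%:M ->
  [set x *m B | x in conv_hull R A] = conv_hull R [set x *m B | x in A].
Proof.
move=> BBi BiB; apply/seteqP; split => z.
  case=> x [n [w [p [w0 w1 Ap ->]]]] <-.
  exists n, w, (fun i => p i *m B); split => //.
    by move=> i; exists (p i).
  by rewrite mulmx_suml; apply: eq_bigr => i _; rewrite scalemxAl.
case=> n [w [q [w0 w1 Aq ->]]].
exists (\sum_i w i *: (q i *m Bi)).
  exists n, w, (fun i => q i *m Bi); split => // i.
  by have [y Ay <-] := Aq i; rewrite -mulmxA BBi mulmx1.
by rewrite mulmx_suml; apply: eq_bigr => i _; rewrite -scalemxAl -mulmxA BiB mulmx1.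
Qed.

Lemma ord_lam {r} {F : valued_flag r} {u v : forall k, fld F k.+1} k :
  is_params F u -> is_params F v -> (0 < k <= r)%N ->
  nth 0 (nuseq F v k (lam F u v k)) 0 = 0.
Proof.
move=> hu hv; case: k => [|k] //= kr.
have [u0 u1] := hu k kr; have [v0 v1] := hv k kr.
by rewrite ordM ?invr_eq0 // ordV // u1 v1 addrN.
Qed.

Lemma Rmat_det (R : realType) {r} {F : valued_flag r} {u v : forall k, fld F k.+1} :
  is_params F u -> is_params F v ->
  \det (map_mx (fun z : int => z%:~R : R) (Rmat F u v)) = 1.
Proof.
move=> hu hv; rewrite -det_tr det_trig.
  apply: big1 => i _; rewrite !mxE /= subKn ?(ltnW (ltn_ord i)) // nth_cat size_nseq ltnn subnn.
  by rewrite ord_lam // ?subn_gt0 ?ltn_ord ?leq_subr // eqxx addr0.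
apply/is_trig_mxP => i j ij; rewrite !mxE /= subKn ?(ltnW (ltn_ord j)) //.
rewrite nth_cat size_nseq ij nth_nseq ij.
have -> : (j == i) = false by apply/eqP => e; move: ij; rewrite e ltnn.
by rewrite addr0.
Qed.

Theorem corollary3p3 (R : realType) (r : nat) (F : valued_flag r)
  (u v : forall k, fld F k.+1) (S : nat -> set (fld F r)) :
  is_params F u -> is_params F v ->
  Gamma F v S = [set x *m Rtilde F u v | x in Gamma F u S] /\
  [set x *m map_mx (fun z : int => z%:~R) (Rmat F u v) | x in Delta F R u S]
    = Delta F R v S.
Proof.
move=> hu hv; split; first exact: Gamma_eq.
set Rr := map_mx _ (Rmat F u v).
have uR : Rr \in unitmx by rewrite unitmxE Rmat_det // unitr1.
rewrite /Delta (closure_map _ _ _ (invmx Rr)) ?mulmxV ?mulVmx //.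
rewrite (conv_map _ _ _ (invmx Rr)) ?mulmxV ?mulVmx //.
congr (rclosure R (conv_hull R _)).
apply/seteqP; split => z.
  case=> y [x [Gx x1] <-] <-.
  exists (x *m Rtilde F u v).
    split; last by rewrite Rt_mul row_mxKl.
    by rewrite (Gamma_eq S hu hv); exists x.
  by rewrite Rt_mul row_mxKl row_mxKr map_mxM scalemxAl.
case=> y [Gy y1] <-.
move: Gy y1; rewrite (Gamma_eq S hu hv); case=> x Gx <-.
rewrite Rt_mul row_mxKl => x1.
exists (((lsubmx x ord0 ord0)%:~R)^-1 *: map_mx (fun z : int => z%:~R) (rsubmx x)).
  by exists x.
by rewrite row_mxKr map_mxM scalemxAl.
Qed.
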